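(* Let $r$ be a rational number with $0<r<1$ and $n\ge2$ an integer. The symmetrized subset $R$ of the free group $F(a,b)$ generated by $u_r^n$ satisfies the small cancellation conditions $C(4n)$ and $T(4)$.
   Context: Words $u_r$: for $r=q/p$ with $0<r\le1$, $p,q$ coprime positive integers, put $\epsilon_i=(-1)^{\lfloor iq/p\rfloor}$; if $p$ is odd, $u_r=a\hat u_r b^{(-1)^q}\hat u_r^{-1}$ with $\hat u_r=b^{\epsilon_1}a^{\epsilon_2}\cdots b^{\epsilon_{p-2}}a^{\epsilon_{p-1}}$; if $p$ is even, $u_r=a\hat u_r a^{-1}\hat u_r^{-1}$ with $\hat u_r=b^{\epsilon_1}a^{\epsilon_2}\cdots a^{\epsilon_{p-2}}b^{\epsilon_{p-1}}$. The symmetrized subset generated by a cyclically reduced word $u$ is the set of all cyclic permutations of $u$ and $u^{-1}$. A nonempty word $b$ is a piece if there exist distinct $w_1,w_2\in R$ with $w_1\equiv bc_1$, $w_2\equiv bc_2$ ($\equiv$ = letter-by-letter equality). Condition $C(p)$: if $w\in R$ is a product $w\equiv w_1\cdots w_t$ of $t$ pieces, then $t\ge p$. Condition $T(q)$: for $w_1,\dots,w_t\in R$ with no successive elements $w_i,w_{i+1}$ (indices mod $t$) an inverse pair, if $t<q$ then at least one of the products $w_1w_2,\dots,w_{t-1}w_t,w_tw_1$ is freely reduced without cancellation. *)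

(* Defs.v *)
From mathcomp Require Import all_boot.
Set Implicit Arguments. Unset Strict Implicit. Unset Printing Implicit Defensive.

(* A letter is a pair (g, s): g = false is the generator a, g = true is b;
   s = false is exponent +1, s = true is exponent -1. *)
Definition letter := (bool * bool)%type.
Definition word := seq letter.

Definition la : letter := (false, false).
Definition lb : letter := (true, false).
Definition linv (x : letter) : letter := (x.1, ~~ x.2).
Definition lpow (g : bool) (neg : bool) : letter := (g, neg).

Definition winv (w : word) : word := rev (map linv w).

(* epsilon_i = (-1)^(floor(i q / p)), encoded as a sign bit *)
Definition eps (p q i : nat) : bool := odd (i * q %/ p).

(* \hat u_r = x_1^{eps_1} ... x_{p-1}^{eps_{p-1}}, x_i = b for odd i, a for even i
   (this matches both the p odd and p even patterns). *)
Definition uhat (p q : nat) : word :=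
  [seq lpow (odd i) (eps p q i) | i <- iota 1 p.-1].

(* u_r for r = q/p *)
Definition u_r (p q : nat) : word :=
  if odd p then la :: uhat p q ++ lpow true (odd q) :: winv (uhat p q)
  else la :: uhat p q ++ linv la :: winv (uhat p q).

Definition wpow (w : word) (n : nat) : word := flatten (nseq n w).

Definition symR (u : word) (w : word) : Prop :=
  exists k, w = rot k u \/ w = rot k (winv u).

Definition piece (R : word -> Prop) (b : word) : Prop :=
  b <> [::] /\
  exists w1 w2 c1 c2, R w1 /\ R w2 /\ w1 <> w2 /\ w1 = b ++ c1 /\ w2 = b ++ c2.

Definition condC (R : word -> Prop) (p : nat) : Prop :=
  forall (w : word) (ws : seq word),
    R w -> (forall b, b \in ws -> piece R b) -> w = flatten ws -> p <= size ws.

Definition nocancel (x y : word) : Prop :=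
  x = [::] \/ y = [::] \/ last la x <> linv (head la y).

(* T(q) (Lyndon--Schupp convention 3 <= t < q) *)
Definition condT (R : word -> Prop) (q : nat) : Prop :=
  forall ws : seq word,
    let t := size ws in
    (forall w, w \in ws -> R w) ->
    3 <= t -> t < q ->
    (forall i, i < t -> nth [::] ws ((i.+1) %% t) <> winv (nth [::] ws i)) ->
    exists2 i, i < t & nocancel (nth [::] ws i) (nth [::] ws ((i.+1) %% t)).

(* Main.v *)
Require Import Defs.
From mathcomp Require Import all_boot.
From mathcomp Require Import all_algebra zify ring.
Import GRing.Theory Num.Theory.
Set Implicit Arguments. Unset Strict Implicit. Unset Printing Implicit Defensive.

Local Open Scope nat_scope.

Definition fl (p q i : nat) : letter := (odd i, odd (i * q %/ p)).

Lemma fl_periodic p q i : 0 < p -> fl p q (i + 2 * p) = fl p q i.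
Proof.
move=> p0; rewrite /fl oddD oddM /= addbF; congr (_, _).
have -> : (i + 2 * p) * q = (2 * q) * p + i * q by nia.
by rewrite divnMDl // oddD oddM /=.
Qed.

Lemma fl_refl p q i : 0 < i < p -> coprime p q -> 0 < q ->
  linv (fl p q i) = fl p q (2 * p - i).
Proof.
move=> /andP[i0 ip] cop q0; rewrite /fl /linv /=; congr (_, _).
  by rewrite oddB ?oddM //=; lia.
have r0 : 0 < i * q %% p.
  rewrite lt0n; apply/negP => /eqP H.
  have : p %| i * q by rewrite /dvdn H.
  rewrite Gauss_dvdl // => /dvdn_leq; lia.
have kq : i * q %/ p < q.
  by rewrite ltn_divLR; [rewrite mulnC ltn_mul2l; lia | lia].
have E : (2 * p - i) * q = (2 * q - i * q %/ p - 1) * p + (p - i * q %% p).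
  have := divn_eq (i * q) p; have := ltn_pmod (i * q) (ltn_trans i0 ip). nia.
rewrite E divnMDl; last lia.
rewrite (@divn_small (p - i * q %% p) p); last lia.
rewrite addn0 !oddB ?oddM /=; try lia.
Qed.

Lemma uhatE p q : uhat p q = map (fl p q) (iota 1 p.-1).
Proof. by []. Qed.

Lemma winv_uhat p q : 0 < q -> q < p -> coprime p q ->
  winv (uhat p q) = map (fl p q) (iota p.+1 p.-1).
Proof.
move=> q0 qp cop.
apply: (@eq_from_nth _ la); first by rewrite /winv size_rev !size_map !size_iota.
move=> i; rewrite /winv size_rev !size_map size_iota => ip.
rewrite nth_rev; last by rewrite !size_map size_iota.
rewrite !size_map size_iota uhatE (nth_map 0); last by rewrite size_iota; lia.
rewrite (nth_map la); last by rewrite size_map size_iota; lia.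
rewrite (nth_map 0); last by rewrite size_iota; lia.
rewrite !nth_iota; try lia.
rewrite fl_refl //; last lia.
congr fl; lia.
Qed.

Lemma u_rE p q : 0 < q -> q < p -> coprime p q ->
  u_r p q = map (fl p q) (iota 0 (2 * p)).
Proof.
move=> q0 qp cop.
have -> : 2 * p = 1 + (p.-1 + (1 + p.-1)) by lia.
rewrite !iotaD !map_cat /= -uhatE.
have -> : 0 + 1 + p.-1 = p by lia.
have -> : p + 1 = p.+1 by lia.
rewrite -winv_uhat // /u_r.
have -> : fl p q p = (odd p, odd q) by rewrite /fl mulKn //; lia.
have -> : fl p q 0 = la by rewrite /fl mul0n div0n.
case po: (odd p); first by [].
have qo : odd q.
  apply/negP => qe.
  move: cop; rewrite /coprime => /eqP cop.
  have : 2 %| gcdn p q by rewrite dvdn_gcd !dvdn2 po; apply/andP; split; last apply/negP.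
  by rewrite cop.
by rewrite qo.
Qed.

Lemma map_fl_shift p q m k : 0 < p ->
  map (fl p q) (iota (k * (2 * p)) m) = map (fl p q) (iota 0 m).
Proof.
move=> p0; rewrite -(addn0 (k * (2 * p))) iotaDl -map_comp.
apply: eq_map => i /=; elim: k => [|k IH]; first by rewrite mul0n add0n.
by rewrite mulSn (addnC (2 * p)) -addnA (addnC (2 * p)) addnA fl_periodic.
Qed.

Lemma wpowE p q n : 0 < q -> q < p -> coprime p q ->
  wpow (u_r p q) n = map (fl p q) (iota 0 (n * (2 * p))).
Proof.
move=> q0 qp cop; rewrite /wpow; elim: n => [|n IH]; first by [].
have -> : flatten (nseq n.+1 (u_r p q)) = u_r p q ++ flatten (nseq n (u_r p q)) by [].
rewrite IH u_rE // (mulSn n) iotaD map_cat add0n.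
congr (_ ++ _).
by rewrite -{2}(mul1n (2 * p)) map_fl_shift //; lia.
Qed.

Local Close Scope nat_scope.
Local Open Scope ring_scope.

Definition Dz (p q t : int) : int := divz (t * q) p.
Definition Fz (p q t : int) : letter := (modz t 2 == 1, modz (Dz p q t) 2 == 1).

Lemma euclid (a p : int) : 0 < p -> a = divz a p * p + modz a p /\ 0 <= modz a p < p.
Proof.
move=> p0; split; first exact: divz_eq.
by rewrite modz_ge0 ?ltz_pmod //; lia.
Qed.

Lemma quot_uniq (X r s p : int) : 0 < p -> X * p = s - r -> 0 <= r < p -> 0 <= s < p -> X = 0.
Proof. move=> *; nia. Qed.

Lemma modz_mulp (X p : int) : 0 < p -> modz (X * p) p = 0.
Proof. by move=> p0; rewrite -(addr0 (X * p)) modzMDl modz_small //; lia. Qed.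

Lemma par_eq (a b : int) : (modz a 2 == 1) = (modz b 2 == 1) -> modz (b - a) 2 = 0.
Proof. lia. Qed.

Lemma par_neq (a b : int) : (modz a 2 == 1) = ~~ (modz b 2 == 1) -> modz (b + a) 2 = 1.
Proof. lia. Qed.

Lemma FF_core (p q t1 t2 d : int) : 0 < p ->
  (forall x, modz (x * q) p = 0 -> modz x p = 0) ->
  (modz p 2 = 1 \/ modz q 2 = 1) ->
  modz (t1 * q) p = 0 -> modz (t2 * q) p = p - 1 ->
  Fz p q t1 = Fz p q (t1 + d) -> Fz p q t2 = Fz p q (t2 + d) ->
  exists k, d = k * (2 * p).
Proof.
move=> p0 cop par k1 k2 [e1 e2] [_ e4].
have hd2 : modz d 2 = 0 by move: (par_eq e1); rewrite (addrC t1) addrK.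
have hb1 := par_eq e2; have hb2 := par_eq e4; clear e1 e2 e4.
rewrite /Dz in hb1 hb2.
have [E1 B1] := euclid (t1 * q) p0.
have [E2 B2] := euclid ((t1 + d) * q) p0.
have [E3 B3] := euclid (t2 * q) p0.
have [E4 B4] := euclid ((t2 + d) * q) p0.
rewrite k1 in E1; rewrite k2 in E3.
move: hb1 hb2 E1 E2 E3 E4 B2 B4; clear B1 B3 k1 k2.
move: (divz (t1 * q) p) (divz ((t1 + d) * q) p) (divz (t2 * q) p) (divz ((t2 + d) * q) p).
move: (modz ((t1 + d) * q) p) (modz ((t2 + d) * q) p).
move=> r1 r2 a1 b1 a2 b2 hb1 hb2 E1 E2 E3 E4 B2 B4.
have dq1 : d * q = (b1 - a1) * p + r1 by clear -E1 E2; lia.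
have dq2 : d * q = (b2 - a2 - 1) * p + (r2 + 1) by clear -E3 E4; lia.
clear E1 E2 E3 E4.
have [lt|eq] : r2 + 1 < p \/ r2 + 1 = p by clear -B4; lia.
  have X0 := @quot_uniq ((b1 - a1) - (b2 - a2 - 1)) r1 (r2 + 1) p p0
    ltac:(clear -dq1 dq2; lia) ltac:(clear -B2; lia) ltac:(clear -B4 lt; lia).
  clear -X0 hb1 hb2; lia.
have X0 := @quot_uniq ((b1 - a1) - (b2 - a2)) r1 0 p p0
  ltac:(clear -dq1 dq2 eq; lia) ltac:(clear -B2; lia) ltac:(clear -p0; lia).
have r10 : r1 = 0 by clear -X0 dq1 dq2 eq; lia.
rewrite r10 addr0 in dq1.
have hd : modz d p = 0 by apply: cop; rewrite dq1; exact: modz_mulp.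
have [Ed _] := euclid d p0.
rewrite hd addr0 in Ed.
move: Ed; move: (divz d p) => e Ed.
have eq2 : e * q = b1 - a1.
  have : (e * q - (b1 - a1)) * p = 0 by rewrite mulrBl -dq1 Ed; ring.
  move/eqP; rewrite mulf_eq0 => /orP [/eqP H|/eqP H]; first by clear -H; lia.
  by move: p0; rewrite H.
have [Ee _] := euclid e (ltr0Sn _ 1).
move: Ee; move: (divz e 2) => f Ee.
have [ev|od] : modz e 2 = 0 \/ modz e 2 = 1 by clear; lia.
  exists f; rewrite ev addr0 in Ee; rewrite Ed Ee; ring.
exfalso; rewrite od in Ee.
have qe : q = e * q - 2 * (f * q) by rewrite Ee; ring.
have pe : p = e * p - 2 * (f * p) by rewrite Ee; ring.
have hd2' : modz (e * p) 2 = 0 by rewrite -Ed.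
rewrite eq2 in qe.
clear -qe pe hd2' hb1 par; lia.
Qed.

Lemma FB_core (p q t1 t2 C : int) : 0 < p ->
  modz (t1 * q) p = 0 -> modz (t2 * q) p = p - 1 ->
  Fz p q t1 = linv (Fz p q (C - t1)) -> Fz p q t2 = linv (Fz p q (C - t2)) -> False.
Proof.
move=> p0 k1 k2 [e1 e2] [_ e4].
have hc : modz C 2 = 0 by move: (par_eq e1); clear; lia.
have hb1 := par_neq e2; have hb2 := par_neq e4; clear e1 e2 e4.
rewrite /Dz in hb1 hb2.
have [E1 B1] := euclid (t1 * q) p0.
have [E2 B2] := euclid ((C - t1) * q) p0.
have [E3 B3] := euclid (t2 * q) p0.
have [E4 B4] := euclid ((C - t2) * q) p0.
rewrite k1 in E1; rewrite k2 in E3.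
move: hb1 hb2 E1 E2 E3 E4 B2 B4; clear B1 B3 k1 k2.
move: (divz (t1 * q) p) (divz ((C - t1) * q) p) (divz (t2 * q) p) (divz ((C - t2) * q) p).
move: (modz ((C - t1) * q) p) (modz ((C - t2) * q) p).
move=> r1 r2 a1 b1 a2 b2 hb1 hb2 E1 E2 E3 E4 B2 B4.
have cq1 : C * q = (b1 + a1) * p + r1 by clear -E1 E2; lia.
have cq2 : C * q = (b2 + a2 + 1) * p + (r2 - 1) by clear -E3 E4; lia.
clear E1 E2 E3 E4.
have [lt|eq] : 1 <= r2 \/ r2 = 0 by clear -B4; lia.
  have X0 := @quot_uniq ((b1 + a1) - (b2 + a2 + 1)) r1 (r2 - 1) p p0
    ltac:(clear -cq1 cq2; lia) ltac:(clear -B2; lia) ltac:(clear -B4 lt; lia).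
  clear -X0 hb1 hb2; lia.
rewrite eq in cq2.
have [Ec _] := euclid C (ltr0Sn _ 1).
have [Eg _] := euclid (b2 + a2 + 1) (ltr0Sn _ 1).
rewrite hc addr0 in Ec.
have hg : modz (b2 + a2 + 1) 2 = 0 by clear -hb2; lia.
rewrite hg addr0 in Eg.
move: Ec Eg; move: (divz C 2) (divz (b2 + a2 + 1) 2) => c g Ec Eg.
have : 2 * (c * q) + 1 = 2 * (g * p).
  have -> : 2 * (c * q) = C * q by rewrite Ec; ring.
  have -> : 2 * (g * p) = (b2 + a2 + 1) * p by rewrite Eg; ring.
  by rewrite cq2; ring.
clear; lia.
Qed.

Lemma Fz_per (p q t k : int) : 0 < p -> Fz p q (t + k * (2 * p)) = Fz p q t.
Proof.
move=> p0; rewrite /Fz /Dz.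
have -> : (t + k * (2 * p)) * q = (2 * k * q) * p + t * q by ring.
rewrite divzMDl; last by clear -p0; lia.
move: (divz (t * q) p) => a.
congr (_, _); clear; lia.
Qed.

Lemma modz_kind (p q t k : int) : 0 < p -> modz ((t + k * p) * q) p = modz (t * q) p.
Proof.
move=> p0; have -> : (t + k * p) * q = (k * q) * p + t * q by ring.
by rewrite modzMDl.
Qed.

Lemma window (p t c : int) (s : nat) (sg : bool) : 0 < p ->
  exists2 j : nat, (s <= j < s + `|p|)%N & exists k, (if sg then t - j%:Z else t + j%:Z) = c + k * p.
Proof.
move=> p0.
have [E B] := euclid (if sg then t - c - s%:Z else c - t - s%:Z) p0.
move: E B; move: (modz (if sg then t - c - s%:Z else c - t - s%:Z) p) => m.
move: (divz (if sg then t - c - s%:Z else c - t - s%:Z) p) => a E B.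
exists (s + `|m|)%N; first by clear -B; lia.
exists (a * (if sg then 1 else -1)).
case: sg E => E; rewrite PoszD; clear -E B; lia.
Qed.

Lemma cop_of_bez (p q u v : int) : 0 < p -> u * p + v * q = 1 ->
  forall x, modz (x * q) p = 0 -> modz x p = 0.
Proof.
move=> p0 bez x h.
have [E _] := euclid (x * q) p0; rewrite h addr0 in E.
move: E; move: (divz (x * q) p) => a E.
have -> : x = (x * u + v * a) * p.
  by rewrite mulrDl -mulrA -(mulrA v) -E -[LHS]mulr1 -bez; ring.
exact: modz_mulp.
Qed.

Lemma c1_of_bez (p q u v : int) : 1 < p -> u * p + v * q = 1 ->
  modz ((- v) * q) p = p - 1.
Proof.
move=> p1 bez.
have -> : (- v) * q = (u - 1) * p + (p - 1).
  by rewrite -[_ * q]addr0 -(subrr 1) -{1}bez; ring.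
by rewrite modzMDl modz_small //; clear -p1; lia.
Qed.

Lemma kind_sep (p q t t' : int) : 0 < p ->
  (forall x, modz (x * q) p = 0 -> modz x p = 0) ->
  modz (t * q) p = modz (t' * q) p -> t != t' -> p <= `|t - t'|.
Proof.
move=> p0 cop h ne.
have [E1 _] := euclid (t * q) p0.
have [E2 _] := euclid (t' * q) p0.
rewrite h in E1.
move: E1 E2; move: (divz (t * q) p) (divz (t' * q) p) (modz (t' * q) p) => a a' r E1 E2.
have : modz ((t - t') * q) p = 0.
  have -> : (t - t') * q = (a - a') * p by clear -E1 E2; lia.
  exact: modz_mulp.
move/cop => h2.
have [E3 _] := euclid (t - t') p0.
rewrite h2 addr0 in E3.
move: E3; move: (divz (t - t') p) => e E3.
have e0 : e != 0 by apply: contraNneq ne => e0; move: E3; rewrite e0 mul0r; clear; lia.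
rewrite E3 normrM; have -> : `|p| = p by clear -p0; lia.
have : 1 <= `|e| by clear -e0; lia.
clear -p0; nia.
Qed.


Lemma fl_Fz (p q i : nat) : fl p q i = Fz (Posz p) (Posz q) (Posz i).
Proof. rewrite /fl /Fz /Dz; congr (_, _); lia. Qed.

Definition lt (p q : int) (b : bool) (t : int) : letter :=
  if b then linv (Fz p q t) else Fz p q t.
Definition pos (b : bool) (x : int) (j : nat) : int := if b then x - j%:Z else x + j%:Z.
Definition formP (p q : int) (L : nat) (w : word) (b : bool) (x : int) :=
  size w = L /\ forall j, (j < L)%N -> nth la w j = lt p q b (pos b x j).

Lemma nth_rot_mod (T : Type) (x0 : T) (w : seq T) s j : (s <= size w)%N -> (j < size w)%N ->
  nth x0 (rot s w) j = nth x0 w (if (s + j < size w)%N then s + j else s + j - size w)%N.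
Proof.
move=> sw jw; rewrite /rot nth_cat size_drop.
case: ifP => h.
  by rewrite nth_drop; have -> : (s + j < size w)%N by lia.
rewrite nth_take; last by lia.
have -> : (s + j < size w)%N = false by lia.
congr nth; lia.
Qed.

Lemma rot_form (p q : int) L w b x s : 0 < p -> (exists n : nat, L = (n * (2 * `|p|))%N) ->
  formP p q L w b x -> (s <= L)%N -> formP p q L (rot s w) b (pos b x s).
Proof.
move=> p0 [n Ln] [sz h] sL; split; first by rewrite size_rot.
move=> j jL; rewrite nth_rot_mod ?sz //.
case: ifP => c.
  rewrite h //; congr (lt _ _ _ _); rewrite /pos; clear h; case: b; rewrite PoszD; ring.
rewrite h; last by clear -c jL sL; lia.
rewrite /lt /pos; clear h.
have P : forall t k, Fz p q (t + k * Posz L) = Fz p q t.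
  move=> t k; rewrite Ln PoszM mulrA.
  have -> : Posz (2 * `|p|)%N = 2 * p by clear -p0; lia.
  exact: Fz_per.
case: b.
  have -> : x - Posz (s + j - L)%N = (x - Posz s - Posz j) + 1 * Posz L by clear -c jL sL; lia.
  by rewrite P.
have -> : x + Posz (s + j - L)%N = (x + Posz s + Posz j) + (-1) * Posz L by clear -c jL sL; lia.
by rewrite P.
Qed.

Lemma U_form (p q n : nat) : (0 < q)%N -> (q < p)%N -> coprime p q ->
  formP p q (n * (2 * p)) (wpow (u_r p q) n) false 0.
Proof.
move=> q0 qp cop; rewrite wpowE //; split; first by rewrite size_map size_iota.
move=> j jL; rewrite (nth_map 0%N) ?size_iota // nth_iota // add0n fl_Fz /lt /pos.
by rewrite add0r.
Qed.

Lemma Uinv_form (p q n : nat) : (0 < q)%N -> (q < p)%N -> coprime p q ->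
  formP p q (n * (2 * p)) (winv (wpow (u_r p q) n)) true (Posz (n * (2 * p)) - 1).
Proof.
move=> q0 qp cop; rewrite wpowE //; split.
  by rewrite /winv size_rev !size_map size_iota.
move=> j jL; rewrite /winv nth_rev ?size_map ?size_iota //.
rewrite (nth_map la) ?size_map ?size_iota; last by clear -jL; lia.
rewrite (nth_map 0%N) ?size_iota; last by clear -jL; lia.
rewrite nth_iota; last by clear -jL; lia.
rewrite add0n fl_Fz /lt /pos; congr (linv (Fz _ _ _)).
by clear -jL; lia.
Qed.

Lemma R_form (p q n : nat) w : (0 < q)%N -> (q < p)%N -> coprime p q ->
  symR (wpow (u_r p q) n) w -> exists b x, formP p q (n * (2 * p)) w b x.
Proof.
move=> q0 qp cop [k [->|->]].
  have F := U_form n q0 qp cop.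
  case: (leqP (n * (2 * p)) k) => kL.
    by exists false, 0; rewrite rot_oversize //; case: F => ->.
  exists false, (pos false 0 k); apply: rot_form => //; first by clear -qp; lia.
  by exists n.
  by clear -kL; lia.
have F := Uinv_form n q0 qp cop.
case: (leqP (n * (2 * p)) k) => kL.
  by exists true, (Posz (n * (2 * p)) - 1); rewrite rot_oversize //; case: F => ->.
exists true, (pos true (Posz (n * (2 * p)) - 1) k); apply: rot_form => //; first by clear -qp; lia.
by exists n.
by clear -kL; lia.
Qed.

Lemma linvK : involutive linv.
Proof. by case=> a b; rewrite /linv /= negbK. Qed.

Lemma key (p q : int) L w w' b b' x y l j1 j2 : 0 < p ->
  (forall z, modz (z * q) p = 0 -> modz z p = 0) ->
  (modz p 2 = 1 \/ modz q 2 = 1) ->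
  (exists n : nat, L = (n * (2 * `|p|))%N) ->
  formP p q L w b x -> formP p q L w' b' y -> (l <= L)%N -> take l w = take l w' ->
  (j1 < l)%N -> (j2 < l)%N ->
  modz (pos b x j1 * q) p = 0 -> modz (pos b x j2 * q) p = p - 1 -> w = w'.
Proof.
move=> p0 cop par [n Ln] [sz h] [sz' h'] lL tk j1l j2l k1 k2.
have ag : forall j, (j < l)%N -> lt p q b (pos b x j) = lt p q b' (pos b' y j).
  move=> j jl; have jL : (j < L)%N by clear -jl lL; lia.
  by rewrite -h // -h' // -(nth_take la jl) tk (nth_take la jl).
have P : forall t k, Fz p q (t + k * (2 * p)) = Fz p q t by move=> t k; exact: Fz_per.
have eqw : forall d, (exists k, d = k * (2 * p)) -> b = b' -> y = x + d -> w = w'.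
  move=> d [k dk] bb yd; subst b' y d; apply: (@eq_from_nth _ la); first by rewrite sz sz'.
  move=> j; rewrite sz => jL; rewrite h // h' //; rewrite /lt /pos.
  case: b {ag h h' k1 k2}.
    have -> : x + k * (2 * p) - Posz j = (x - Posz j) + k * (2 * p) by ring.
    by rewrite P.
  have -> : x + k * (2 * p) + Posz j = (x + Posz j) + k * (2 * p) by ring.
  by rewrite P.
have a1 := ag _ j1l; have a2 := ag _ j2l.
move: k1 k2 a1 a2 eqw; rewrite /lt /pos; clear h h' ag tk.
case: b => [|]; case: b' => [|] k1 k2 a1 a2 eqw.
- apply: (eqw (y - x)) => //; last by ring.
  apply: (FF_core p0 cop par k1 k2).
    by apply: (can_inj linvK); rewrite a1; congr (linv (Fz _ _ _)); ring.
  by apply: (can_inj linvK); rewrite a2; congr (linv (Fz _ _ _)); ring.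
- exfalso; apply: (FB_core p0 k1 k2 (C := x + y)).
    by rewrite -[LHS]linvK a1; congr (linv (Fz _ _ _)); ring.
  by rewrite -[LHS]linvK a2; congr (linv (Fz _ _ _)); ring.
- exfalso; apply: (FB_core p0 k1 k2 (C := x + y)).
    by rewrite a1; congr (linv (Fz _ _ _)); ring.
  by rewrite a2; congr (linv (Fz _ _ _)); ring.
- apply: (eqw (y - x)) => //; last by ring.
  apply: (FF_core p0 cop par k1 k2).
    by rewrite a1; congr (Fz _ _ _); ring.
  by rewrite a2; congr (Fz _ _ _); ring.
Qed.


Lemma pos_add b x (s j : nat) : pos b (pos b x s) j = pos b x (s + j).
Proof. by rewrite /pos PoszD; case: b; ring. Qed.

Lemma piece_local (p q : int) L R w b x b0 (s : nat) j1 j2 : 0 < p ->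
  (forall z, modz (z * q) p = 0 -> modz z p = 0) ->
  (modz p 2 = 1 \/ modz q 2 = 1) ->
  (exists n : nat, L = (n * (2 * `|p|))%N) ->
  (forall w', R w' -> exists b' y, formP p q L w' b' y) ->
  formP p q L w b x -> piece R b0 -> take (size b0) (drop s w) = b0 ->
  (s + size b0 <= L)%N -> (j1 < size b0)%N -> (j2 < size b0)%N ->
  modz (pos b x (s + j1) * q) p = 0 -> modz (pos b x (s + j2) * q) p = p - 1 -> False.
Proof.
move=> p0 cop par per Rf F [_ [w1 [w2 [c1 [c2 [R1 [R2 [ne [e1 e2]]]]]]]]] tk sl l1 l2 k1 k2.
have sL : (s <= L)%N by clear -sl; lia.
have F0 := rot_form p0 per F sL.
have sz := F.1.
have tk0 : take (size b0) (rot s w) = b0.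
  by rewrite /rot takel_cat // size_drop sz; clear -sl; lia.
have gen : forall w', R w' -> take (size b0) w' = b0 -> w' <> rot s w -> False.
  move=> w' Rw' tw' neq; have [b' [y F']] := Rf _ Rw'.
  have lL : (size b0 <= L)%N by clear -sl; lia.
  rewrite -pos_add in k1; rewrite -pos_add in k2.
  have := key p0 cop par per F0 F' lL _ l1 l2 k1 k2.
  by rewrite tk0 tw' => /(_ erefl) eqw'; apply: neq; rewrite eqw'.
have tw1 : take (size b0) w1 = b0 by rewrite e1 take_size_cat.
have tw2 : take (size b0) w2 = b0 by rewrite e2 take_size_cat.
have [E|E] := eqVneq w1 (rot s w).
  by apply: (gen w2 R2 tw2) => E2; apply: ne; rewrite E E2.
by apply: (gen w1 R1 tw1); apply/eqP.
Qed.

Lemma count_le1 (T : eqType) (a : pred T) (l : seq T) : uniq l ->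
  (forall i j, i \in l -> j \in l -> a i -> a j -> i = j) -> (count a l <= 1)%N.
Proof.
elim: l => [|x l IH] //= /andP [xl ul] H.
case ax: (a x) => /=.
  rewrite -[X in (_ <= X)%N]addn0 leq_add2l leqn0 eqn0Ngt -has_count; apply/negP => /hasP [y yl ay].
  have exy := H x y (mem_head _ _) ltac:(by rewrite inE yl orbT) ax ay.
  by move: xl; rewrite exy yl.
rewrite add0n; apply: IH => // i j il jl; apply: H; by rewrite inE ?il ?jl orbT.
Qed.

Lemma count_ge2 (T : eqType) (a : pred T) (l : seq T) i j : uniq l ->
  i \in l -> j \in l -> i != j -> a i -> a j -> (2 <= count a l)%N.
Proof.
move=> ul il jl ij ai aj; rewrite -size_filter.
have : uniq [:: i; j] by rewrite /= inE ij.
move/uniq_leq_size; apply => y; rewrite !inE => /orP [] /eqP ->;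
  by rewrite mem_filter ?ai ?aj ?il ?jl.
Qed.

Lemma window_kind (p q : int) b x c (s : nat) : 0 < p ->
  exists2 j : nat, (s <= j < s + `|p|)%N & modz (pos b x j * q) p = modz (c * q) p.
Proof.
move=> p0; have [j jr [k e]] := window x c s b p0.
by exists j => //; rewrite /pos e modz_kind.
Qed.

Definition mk0 (p q : int) b x : pred nat := fun j => modz (pos b x j * q) p == 0.
Definition mk1 (p q : int) b x : pred nat := fun j => modz (pos b x j * q) p == p - 1.
Definition mk (p q : int) b x : pred nat := predU (mk0 p q b x) (mk1 p q b x).

Lemma pos_diff b x (i j : nat) : `|pos b x i - pos b x j| = `|Posz i - Posz j|.
Proof. by rewrite /pos; case: b; lia. Qed.

Lemma count_kind_le1 (p q : int) b x (s l : nat) r : 0 < p ->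
  (forall z, modz (z * q) p = 0 -> modz z p = 0) -> (l < `|p|)%N ->
  (count (fun j => modz (pos b x j * q) p == r) (iota s l) <= 1)%N.
Proof.
move=> p0 cop lp; apply: count_le1; first exact: iota_uniq.
move=> i j; rewrite !mem_iota => ir jr /eqP ei /eqP ej; apply/eqP/negP => /negP nij.
have ne : pos b x i != pos b x j by apply: contra nij; rewrite /pos; clear; case: b; lia.
have := kind_sep p0 cop (etrans ei (esym ej)) ne.
rewrite pos_diff; clear -ir jr lp nij p0; lia.
Qed.

Lemma piece_count (p q : int) L R w b x b0 (s : nat) : 1 < p ->
  (forall z, modz (z * q) p = 0 -> modz z p = 0) ->
  (modz p 2 = 1 \/ modz q 2 = 1) ->
  (exists c1, modz (c1 * q) p = p - 1) ->
  (exists n : nat, L = (n * (2 * `|p|))%N) ->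
  (forall w', R w' -> exists b' y, formP p q L w' b' y) ->
  formP p q L w b x -> piece R b0 -> take (size b0) (drop s w) = b0 ->
  (s + size b0 <= L)%N -> (count (mk p q b x) (iota s (size b0)) <= 1)%N.
Proof.
move=> p1 cop par [c1 hc1] per Rf F pc tk sl.
have p0 : 0 < p by clear -p1; lia.
have PL := piece_local p0 cop par per Rf F pc tk sl.
have lp : (size b0 < `|p|)%N.
  rewrite ltnNge; apply/negP => pl.
  have [j0 r0 e0] := window_kind q b x 0 s p0.
  have [j1 r1 e1] := window_kind q b x c1 s p0.
  apply: (PL (j0 - s)%N (j1 - s)%N); try (clear -r0 r1 pl; lia).
    have -> : (s + (j0 - s))%N = j0 by clear -r0; lia.
    by rewrite e0 mul0r modz_small //; clear -p0; lia.
  have -> : (s + (j1 - s))%N = j1 by clear -r1; lia.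
  by rewrite e1.
have c0 : (count (mk0 p q b x) (iota s (size b0)) <= 1)%N := count_kind_le1 b x s 0 p0 cop lp.
have c1' : (count (mk1 p q b x) (iota s (size b0)) <= 1)%N := count_kind_le1 b x s (p - 1) p0 cop lp.
have U := count_predUI (mk0 p q b x) (mk1 p q b x) (iota s (size b0)).
rewrite /mk.
have [h0|h0] := boolP (has (mk0 p q b x) (iota s (size b0))); last first.
  move: h0; rewrite has_count -leqNgt leqn0 => /eqP h0.
  rewrite h0 in U; clear -U c1'; lia.
have [h1|h1] := boolP (has (mk1 p q b x) (iota s (size b0))); last first.
  move: h1; rewrite has_count -leqNgt leqn0 => /eqP h1.
  rewrite h1 in U; clear -U c0; lia.
exfalso; move/hasP: h0 => [j0 j0r e0]; move/hasP: h1 => [j1 j1r e1].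
rewrite mem_iota in j0r; rewrite mem_iota in j1r.
apply: (PL (j0 - s)%N (j1 - s)%N); try (clear -j0r j1r; lia).
  have -> : (s + (j0 - s))%N = j0 by clear -j0r; lia.
  exact/eqP.
have -> : (s + (j1 - s))%N = j1 by clear -j1r; lia.
exact/eqP.
Qed.

Lemma decomp_count (p q : int) L R w b x : 1 < p ->
  (forall z, modz (z * q) p = 0 -> modz z p = 0) ->
  (modz p 2 = 1 \/ modz q 2 = 1) ->
  (exists c1, modz (c1 * q) p = p - 1) ->
  (exists n : nat, L = (n * (2 * `|p|))%N) ->
  (forall w', R w' -> exists b' y, formP p q L w' b' y) ->
  formP p q L w b x ->
  forall (ws : seq word) (s : nat), (s + size (flatten ws) <= L)%N ->
  take (size (flatten ws)) (drop s w) = flatten ws ->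
  (forall b0, b0 \in ws -> piece R b0) ->
  (count (mk p q b x) (iota s (size (flatten ws))) <= size ws)%N.
Proof.
move=> p1 cop par hc1 per Rf F; elim=> [|b0 ws IH] s //= sl tk pcs.
rewrite size_cat in sl tk *; rewrite iotaD count_cat.
rewrite takeD in tk.
have tk1 : take (size b0) (drop s w) = b0.
  have := congr1 (take (size b0)) tk.
  by rewrite take_size_cat ?size_take ?size_drop ?take_size_cat //;
    case: F => sz _; rewrite sz; clear -sl; case: ifP; lia.
have tk2 : take (size (flatten ws)) (drop (s + size b0) w) = flatten ws.
  have := congr1 (drop (size b0)) tk.
  rewrite drop_size_cat ?drop_size_cat // ?size_take ?size_drop; last first.
    by case: F => sz _; rewrite sz; clear -sl; case: ifP; lia.
  by rewrite drop_drop addnC.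
have c1 := piece_count p1 cop par hc1 per Rf F (pcs _ (mem_head _ _)) tk1 ltac:(clear -sl; lia).
have c2 := IH (s + size b0)%N ltac:(clear -sl; lia) tk2 (fun b1 h => pcs b1 ltac:(by rewrite inE h orbT)).
clear -c1 c2; lia.
Qed.

Lemma count_lower (p q : int) b x : 1 < p ->
  (exists c1, modz (c1 * q) p = p - 1) ->
  forall m s, (2 * m <= count (mk p q b x) (iota s (m * `|p|)))%N.
Proof.
move=> p1 [c1 hc1]; have p0 : 0 < p by clear -p1; lia.
elim=> [|m IH] s //.
rewrite (mulSn m `|p|) iotaD count_cat.
have [j0 r0 e0] := window_kind q b x 0 s p0.
have [j1 r1 e1] := window_kind q b x c1 s p0.
have a0 : mk p q b x j0 by rewrite /mk /= /mk0 e0 mul0r modz_small //; clear -p1; lia.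
have a1 : mk p q b x j1 by rewrite /mk /= /mk1 e1 hc1 eqxx orbT.
have n01 : j0 != j1.
  apply/negP => /eqP e; rewrite e e1 hc1 in e0; move: e0; rewrite mul0r modz_small; clear -p1; lia.
have i0 : j0 \in iota s `|p| by rewrite mem_iota.
have i1 : j1 \in iota s `|p| by rewrite mem_iota.
have := count_ge2 (iota_uniq s `|p|) i0 i1 n01 a0 a1.
have h1 := IH (s + `|p|)%N; move=> h2; apply: leq_trans (leq_add h2 h1); by rewrite mulnS.
Qed.

Lemma condC_gen (p q : int) (n : nat) R : 1 < p ->
  (forall z, modz (z * q) p = 0 -> modz z p = 0) ->
  (modz p 2 = 1 \/ modz q 2 = 1) ->
  (exists c1, modz (c1 * q) p = p - 1) ->
  (forall w', R w' -> exists b' y, formP p q (n * (2 * `|p|))%N w' b' y) ->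
  condC R (4 * n).
Proof.
move=> p1 cop par hc1 Rf w ws Rw pcs ew.
have [b [x F]] := Rf _ Rw.
have sz : size (flatten ws) = (n * (2 * `|p|))%N by rewrite -ew; case: F.
have := decomp_count p1 cop par hc1 (ex_intro _ n erefl) Rf F (s := 0%N) (ws := ws).
have h1 : (0 + size (flatten ws) <= n * (2 * `|p|))%N by rewrite sz add0n.
have h2 : take (size (flatten ws)) (drop 0 w) = flatten ws by rewrite drop0 -ew take_size.
move=> /(_ h1 h2 pcs) H.
have := count_lower b x p1 hc1 (2 * n) 0.
have -> : ((2 * n) * `|p|)%N = size (flatten ws) by rewrite sz; clear; lia.
move=> H2; apply: leq_trans H; apply: leq_trans H2.
by rewrite mulnA.
Qed.


Lemma condT_gen (R : word -> Prop) :
  (forall w, R w -> w <> [::] /\ (last la w).1 = ~~ (head la w).1) -> condT R 4.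
Proof.
move=> HR ws t Rws t3 t4.
rewrite /t in t3 t4 *; clear t.
case: ws Rws t3 t4 => [|w0 [|w1 [|w2 [|w3 ws]]]] //= Rws _ _ _.
have [n0 h0] := HR w0 (Rws _ (mem_head _ _)).
have [n1 h1] := HR w1 (Rws w1 ltac:(by rewrite in_cons mem_head orbT)).
have [n2 h2] := HR w2 (Rws w2 ltac:(by rewrite !in_cons eqxx !orbT)).
case E0: (last la w0 == linv (head la w1)); last first.
  by exists 0%N => //; right; right; apply/eqP; rewrite E0.
case E1: (last la w1 == linv (head la w2)); last first.
  by exists 1%N => //; right; right; apply/eqP; rewrite E1.
case E2: (last la w2 == linv (head la w0)); last first.
  by exists 2%N => //; right; right; apply/eqP; rewrite E2.
exfalso; move/eqP: E0 => E0; move/eqP: E1 => E1; move/eqP: E2 => E2.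
move: h0 h1 h2; rewrite E0 E1 E2 /=.
by case: (head la w0).1; case: (head la w1).1; case: (head la w2).1.
Qed.


Lemma form_ends (p q : int) L w b x : 0 < p -> (exists n : nat, L = (n * (2 * `|p|))%N) ->
  (0 < L)%N -> formP p q L w b x -> w <> [::] /\ (last la w).1 = ~~ (head la w).1.
Proof.
move=> p0 [n Ln] L0 [sz h]; split; first by move=> e; move: sz; rewrite e /=; clear -L0; lia.
rewrite -nth_last -nth0 sz !h //; last by clear -L0; lia.
rewrite /lt /pos; have ev : (Posz L.-1) = 2 * (Posz (n * `|p|)) - 1 by rewrite Ln; clear -L0 Ln; lia.
rewrite ev; clear h; case: b; rewrite /linv /Fz /=; clear; lia.
Qed.


Local Close Scope ring_scope.
Local Open Scope nat_scope.
Unset Implicit Arguments.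

Theorem mainTheorem6 (p q n : nat) :
  0 < q -> q < p -> coprime p q -> 2 <= n ->
  condC (symR (wpow (u_r p q) n)) (4 * n) /\ condT (symR (wpow (u_r p q) n)) 4.
Proof.
Local Open Scope ring_scope.
move=> q0 qp cop n2.
have p1 : 1 < Posz p by clear -qp q0; lia.
have p0 : 0 < Posz p by clear -p1; lia.
have [u [v bez]] := Bezoutz (Posz p) (Posz q).
have g1 : gcdz (Posz p) (Posz q) = 1 by rewrite /gcdz /=; move/eqP: cop => ->.
rewrite g1 in bez.
have copz := cop_of_bez p0 bez.
have hc1 : exists c1, modz (c1 * Posz q) (Posz p) = Posz p - 1.
  by exists (- v); apply: (c1_of_bez p1 bez).
have par : modz (Posz p) 2 = 1 \/ modz (Posz q) 2 = 1.
  have : odd p || odd q.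
    case: (boolP (odd p)) => //= pe; case: (boolP (odd q)) => // qe; exfalso.
    move: cop; rewrite /coprime => /eqP cop'.
    have : (2 %| gcdn p q)%N by rewrite dvdn_gcd !dvdn2 pe qe.
    by rewrite cop'.
  by clear; case/orP => h; [left | right]; lia.
have Rf : forall w', symR (wpow (u_r p q) n) w' ->
    exists b' y, formP (Posz p) (Posz q) (n * (2 * `|Posz p|))%N w' b' y.
  by move=> w' Rw'; exact: R_form q0 qp cop Rw'.
split; first exact: condC_gen p1 copz par hc1 Rf.
apply: condT_gen => w Rw; have [b [x F]] := Rf w Rw.
apply: form_ends p0 _ _ F; first by exists n.
by rewrite !muln_gt0 /=; apply/andP; split; clear -n2 qp; lia.
Qed.
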